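(* For every integer $n>2$, the Euclidean space $\mathbb R^n$ is strongly discrete homogeneous.
   Context: A subset $D$ of $X$ is discrete if each point of $X$ has a neighbourhood containing at most one point of $D$. A Hausdorff space $X$ is strongly discrete homogeneous (sDH) if for any two discrete subsets $A,B$ of $X$ and any bijection $f\colon A\to B$, $f$ extends to a homeomorphism of $X$ onto itself. *)

(* Defs.v *)
From HB Require Import structures.
From mathcomp Require Import all_boot all_order all_algebra.
From mathcomp Require Import all_classical all_reals all_analysis.
Import numFieldNormedType.Exports.
Set Implicit Arguments. Unset Strict Implicit. Unset Printing Implicit Defensive.
Import Order.TTheory GRing.Theory Num.Theory.
Local Open Scope classical_set_scope.

Definition discrete_subset {X : topologicalType} (D : set X) : Prop :=
  forall x : X, exists2 U : set X, nbhs x U &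
    forall a b, D a -> D b -> U a -> U b -> a = b.

Definition self_homeomorphism {X : topologicalType} (h : X -> X) : Prop :=
  exists g : X -> X,
    [/\ cancel h g, cancel g h, continuous h & continuous g].

(* Strongly discrete homogeneous: Hausdorff, and every bijection between
   discrete subsets A, B (given as a map f : X -> X restricting to a
   bijection A -> B) extends to a self-homeomorphism of X. *)
Definition sDH (X : topologicalType) : Prop :=
  hausdorff_space X /\
  forall (A B : set X) (f : X -> X),
    discrete_subset A -> discrete_subset B -> set_bij A B f ->
    exists h : X -> X, self_homeomorphism h /\ forall a, A a -> h a = f a.

(* Main.v *)
Require Import Defs.
From HB Require Import structures.
From mathcomp Require Import all_boot all_order all_algebra.
From mathcomp Require Import all_classical all_reals all_analysis.
Import numFieldNormedType.Exports.
Set Implicit Arguments. Unset Strict Implicit. Unset Printing Implicit Defensive.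
Import Order.TTheory GRing.Theory Num.Theory.
Local Open Scope classical_set_scope.
Local Open Scope ring_scope.
From mathcomp Require Import ring lra finmap.

Section General.
Context {X : topologicalType}.

Lemma homeo_id : self_homeomorphism (@id X).
Proof. by exists id; split => // x; exact: cvg_id. Qed.

Lemma homeo_comp (h k : X -> X) :
  self_homeomorphism h -> self_homeomorphism k -> self_homeomorphism (h \o k).
Proof.
move=> [g [hg gh ch cg]] [g' [kg gk ck cg']].
exists (g' \o g); split.
- by move=> x /=; rewrite hg kg.
- by move=> x /=; rewrite gk gh.
- by move=> x; apply: continuous_comp; [exact: ck|exact: ch].
- by move=> x; apply: continuous_comp; [exact: cg|exact: cg'].
Qed.

Lemma homeo_inv (h : X -> X) : self_homeomorphism h ->
  exists g, [/\ self_homeomorphism g, cancel h g & cancel g h].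
Proof.
move=> [g [hg gh ch cg]]; exists g; split => //.
by exists h; split.
Qed.

Lemma discrete_sub (A B : set X) : B `<=` A -> discrete_subset A -> discrete_subset B.
Proof.
move=> BA dA x; have [U nU HU] := dA x; exists U => // a b Ba Bb.
exact: HU (BA _ Ba) (BA _ Bb).
Qed.

Lemma discrete_homeo_image (h : X -> X) (A : set X) :
  self_homeomorphism h -> discrete_subset A -> discrete_subset (h @` A).
Proof.
move=> [g [hg gh ch cg]] dA y; have [U nU HU] := dA (g y).
exists (g @^-1` U); first exact: cg.
move=> _ _ [a Aa <-] [b Bb <-] /=; rewrite !hg => Ua Ub.
by rewrite (HU a b).
Qed.

End General.

Section Ext1.
Context {R : realType}.

Lemma discrete_closedR (S : set R) : discrete_subset S -> closed S.
Proof.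
move=> dS x clx; apply: contrapT => Sx.
have [U nU HU] := dS x.
have [s [Ss Us]] := clx U nU.
have xs : x != s by apply/eqP => xs; apply: Sx; rewrite xs.
have e0 : 0 < `|x - s| by rewrite normr_gt0 subr_eq0.
have [t [St [Ut bt]]] := clx _ (filterI nU (nbhsx_ballx x _ e0)).
have ts : t = s := HU t s St Ss Ut Us.
by move: bt; rewrite ts /ball /= ltxx.
Qed.

Lemma discrete_within (T : topologicalType) (S : set R) (f : R -> T) :
  discrete_subset S -> {within S, continuous f}.
Proof.
move=> dS x W /= nW.
case: (pselect (S x)) => Sx.
  suff : nbhs_subspace x (f @^-1` W) by [].
  rewrite -(@nbhs_subspace_in _ S (x : R) Sx) /within /=.
  have [U nU HU] := dS x.
  have Ux := nbhs_singleton nU.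
  apply: filterS nU => y Uy Sy.
  have -> : y = x := HU y x Sy Sx Uy Ux.
  exact: nbhs_singleton.
suff : nbhs_subspace x (f @^-1` W) by [].
rewrite -(@nbhs_subspace_out _ S (x : R) Sx) /globally /= => y ->.
exact: nbhs_singleton.
Qed.


Lemma ext1 (S : set R) (c : R -> R) : discrete_subset S ->
  exists phi : R -> R, continuous phi /\ (forall t, S t -> phi t = c t).
Proof.
move=> dS; have cS := discrete_closedR dS.
pose sg (t : R) := t / (1 + `|t|).
have sg_lt1 t : `|sg t| < 1.
  rewrite /sg normrM normfV (ger0_norm (_ : 0 <= 1 + `|t|)); last by rewrite addr_ge0.
  rewrite ltr_pdivrMr; last by rewrite ltr_pwDl.
  lra.
pose tau (s : R) := s / (1 - `|s|).
have tau_sg t : tau (sg t) = t.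
  rewrite /tau /sg normrM normfV (ger0_norm (_ : 0 <= 1 + `|t|)); last by rewrite addr_ge0.
  have h1 : 1 + `|t| != 0 by rewrite gt_eqF // ltr_pwDl.
  have h2 : 1 - `|t| / (1 + `|t|) = (1 + `|t|)^-1.
    by field.
  rewrite h2; field.
  by rewrite h1.
have [g [fg cg gb]] := @continuous_bounded_extension R R pseudometric_normal S cS
  (sg \o c) 1 ltr01 (discrete_within dS) (fun x _ => ltW (sg_lt1 _)).
pose Z := (fun x => `|g x|) @^-1` [set 1].
have cZ : closed Z.
  apply: preimage_closed; last exact: closed_eq.
  move=> x _; apply: continuous_comp; [exact: cg | exact: norm_continuous].
have ZS : Z `&` S = set0.
  apply/seteqP; split => // x [Zx Sx].
  move: Zx; rewrite /Z /= -(fg x (mem_set Sx)) => gx.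
  by move: (sg_lt1 (c x)); rewrite /= gx ltxx.
have [u [cu uZ uS ur]] := @urysohn_ext_itv R R pseudometric_normal Z S 0 1 cZ cS ZS ltr01.
pose h x := g x * u x.
have ch : continuous h by move=> x; apply: continuousM; [exact: cg|exact: cu].
have u01 x : 0 <= u x <= 1.
  by have := ur (u x) (imageT _ x); rewrite /= in_itv.
have h_lt1 x : `|h x| < 1.
  case: (eqVneq `|g x| 1) => gx.
    have ux0 : u x = 0 by apply: (uZ (u x)); exists x.
    by rewrite /h ux0 mulr0 normr0 ltr01.
  have gx1 : `|g x| < 1 by rewrite lt_neqAle gx gb.
  rewrite /h normrM; have /andP[u0 u1] := u01 x.
  rewrite (ger0_norm u0).
  apply: (le_lt_trans _ gx1).
  by rewrite ler_piMr.
exists (fun x => tau (h x)); split.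
  move=> x; rewrite /tau.
  apply: continuousM; first exact: ch.
  apply: continuousV.
    by rewrite subr_eq0 eq_sym lt_eqF // h_lt1.
  apply: continuousB; first exact: cvg_cst.
  by apply: continuous_comp; [exact: ch | exact: norm_continuous].
move=> t St.
have ut1 : u t = 1 by apply: (uS (u t)); exists t.
by rewrite /h ut1 mulr1 -(fg t (mem_set St)) /= tau_sg.
Qed.

End Ext1.

Section Rn.
Context {R : realType}.

Definition ev n (j : 'I_n) : 'rV[R]_n := delta_mx 0 j.

Lemma coordD n (x : 'rV[R]_n) (a : R) (j k : 'I_n) :
  (x + a *: ev j) ord0 k = x ord0 k + (if j == k then a else 0).
Proof. by rewrite !mxE /= eq_sym; case: eqP => _; rewrite ?mulr1 ?mulr0. Qed.

Lemma coord_cont n (i : 'I_n) : continuous (fun x : 'rV[R]_n => x ord0 i).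
Proof. by move=> x; exact: coord_continuous. Qed.

Lemma shear_homeo n (i j : 'I_n) (phi : R -> R) : i != j -> continuous phi ->
  self_homeomorphism (fun x : 'rV[R]_n => x + phi (x ord0 i) *: ev j).
Proof.
move=> ij cphi.
have ci : forall x : 'rV[R]_n, (x + phi (x ord0 i) *: ev j) ord0 i = x ord0 i.
  by move=> x; rewrite coordD eq_sym (negPf ij) addr0.
have ci' : forall x : 'rV[R]_n, (x - phi (x ord0 i) *: ev j) ord0 i = x ord0 i.
  by move=> x; rewrite -scaleNr coordD eq_sym (negPf ij) addr0.
exists (fun x : 'rV[R]_n => x - phi (x ord0 i) *: ev j); split.
- by move=> x /=; rewrite ci addrK.
- by move=> x /=; rewrite ci' subrK.
- move=> x; apply: (@continuousD R _ _ (@id 'rV[R]_n) (fun x => phi (x ord0 i) *: ev j)); first exact: cvg_id.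
  apply: continuousZr_tmp; apply: continuous_comp; [exact: coord_cont|exact: cphi].
- move=> x; apply: (@continuousB R _ _ (@id 'rV[R]_n) (fun x => phi (x ord0 i) *: ev j)); first exact: cvg_id.
  apply: continuousZr_tmp; apply: continuous_comp; [exact: coord_cont|exact: cphi].
Qed.

Definition on_axis n (i0 : 'I_n) (x : 'rV[R]_n) := forall k, k != i0 -> x ord0 k = 0.

Lemma axis_eq n (i0 : 'I_n) (x : 'rV[R]_n) : on_axis i0 x -> x = x ord0 i0 *: ev i0.
Proof.
move=> ax; apply/rowP => k; rewrite !mxE /=.
case: (eqVneq k i0) => [->|ik]; first by rewrite mulr1.
by rewrite mulr0 ax.
Qed.

Lemma axis_inj n (i0 : 'I_n) (x y : 'rV[R]_n) : on_axis i0 x -> on_axis i0 y ->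
  x ord0 i0 = y ord0 i0 -> x = y.
Proof. by move=> ax ay e; rewrite (axis_eq ax) (axis_eq ay) e. Qed.

Lemma axis_discrete n (i0 : 'I_n) (D : set 'rV[R]_n) : discrete_subset D ->
  (forall d, D d -> on_axis i0 d) -> discrete_subset [set d ord0 i0 | d in D].
Proof.
move=> dD ax t; have [U nU HU] := dD (t *: ev i0).
exists ((fun s : R => s *: ev i0) @^-1` U).
  have cs : continuous (fun s : R => s *: ev i0 : 'rV[R]_n).
    by move=> s; apply: continuousZr_tmp; exact: cvg_id.
  exact: cs.
move=> _ _ [a Da <-] [b Db <-] /= Ua Ub.
rewrite -(axis_eq (ax a Da)) -(axis_eq (ax b Db)) in Ua Ub.
by rewrite (HU a b).
Qed.


Lemma stage2 n (i0 i1 : 'I_n) (A : set 'rV[R]_n) (f : 'rV[R]_n -> 'rV[R]_n) :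
  i0 != i1 -> discrete_subset A -> discrete_subset (f @` A) ->
  (forall a, A a -> on_axis i0 a) -> (forall a, A a -> on_axis i0 (f a)) ->
  (forall a b, A a -> A b -> f a = f b -> a = b) ->
  exists h, self_homeomorphism h /\ forall a, A a -> h a = f a.
Proof.
move=> i01 dA dfA axA axf finj.
have dSA := axis_discrete dA axA.
have dSB : discrete_subset [set d ord0 i0 | d in f @` A].
  by apply: axis_discrete => // _ [a Aa <-]; exact: axf.
pose pa t := xget 0 [set a | A a /\ a ord0 i0 = t].
have paE a : A a -> pa (a ord0 i0) = a.
  move=> Aa; apply: xget_unique; first by split.
  by move=> y [Ay ey]; apply: axis_inj; [exact: axA|exact: axA|].
pose pb t := xget 0 [set a | A a /\ f a ord0 i0 = t].
have pbE a : A a -> pb (f a ord0 i0) = a.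
  move=> Aa; apply: xget_unique; first by split.
  move=> y [Ay ey]; apply: finj => //.
  by apply: axis_inj; [exact: axf|exact: axf|].
have [phi1 [c1 e1]] := ext1 (fun t => f (pa t) ord0 i0) dSA.
have [phi2 [c2 e2]] := ext1 (fun t => t - pb t ord0 i0) dSB.
have c3 : continuous (fun t : R => - t) by move=> t; apply: continuousN; exact: cvg_id.
pose h1 := fun x : 'rV[R]_n => x + phi1 (x ord0 i0) *: ev i1.
pose h2 := fun x : 'rV[R]_n => x + phi2 (x ord0 i1) *: ev i0.
pose h3 := fun x : 'rV[R]_n => x + (- x ord0 i0) *: ev i1.
exists (h3 \o h2 \o h1); split.
  apply: homeo_comp; last exact: shear_homeo.
  apply: homeo_comp; last by apply: shear_homeo; rewrite // eq_sym.
  exact: (@shear_homeo n i0 i1 (fun t => - t) i01 c3).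
move=> a Aa /=.
have i10 : i1 != i0 by rewrite eq_sym.
have p1 : phi1 (a ord0 i0) = f a ord0 i0.
  by rewrite e1 /= ?paE //; exists a.
have p2 : phi2 (f a ord0 i0) = f a ord0 i0 - a ord0 i0.
  by rewrite e2 /= ?pbE //; exists (f a) => //; exists a.
have a1 : a ord0 i1 = 0 by apply: axA; rewrite // eq_sym.
have h1a : h1 a ord0 i1 = f a ord0 i0.
  by rewrite /h1 coordD eqxx a1 add0r.
have h2a : h2 (h1 a) ord0 i0 = f a ord0 i0.
  rewrite /h2 coordD eqxx h1a p2 /h1 coordD (negPf i10) addr0.
  by rewrite addrC subrK.
rewrite /h3 h2a /h2 h1a p2 /h1 p1.
apply/rowP => k; rewrite !coordD.
case: (eqVneq k i0) => [->|ki0].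
  rewrite (negPf i10) !addr0; by rewrite addrC subrK.
rewrite (axA a Aa k ki0) (axf a Aa k ki0) add0r.
rewrite addr0.
by case: (i1 == k); rewrite ?addr0 // subrr.
Qed.

End Rn.

Section Fin.
Context {R : realType}.

Lemma subset1_finite (T : Type) (B : set T) :
  (forall a b, B a -> B b -> a = b) -> finite_set B.
Proof.
move=> HB; case: (pselect (exists a, B a)) => [[a Ba]|nB].
  by apply: (sub_finite_set _ (finite_set1 a)) => b Bb; rewrite (HB b a).
apply: (sub_finite_set _ (finite_set0 T)) => b Bb; apply: nB; by exists b.
Qed.

Lemma discrete_compact_finite n (A K : set 'rV[R]_n) :
  discrete_subset A -> compact K -> finite_set (A `&` K).
Proof.
move=> dA cK.
have : forall x : 'rV[R]_n, exists U : set 'rV[R]_n,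
    nbhs x U /\ (forall a b, A a -> A b -> U a -> U b -> a = b).
  by move=> x; have [U ? ?] := dA x; exists U.
case/choice => U HU.
rewrite compact_cover in cK.
have [D' sD cov] : finite_subset_cover K (fun x => (U x)°) K.
  apply: cK; first by move=> x _; exact: open_interior.
  move=> x Kx; exists x => //.
  exact: nbhs_singleton (nbhs_interior (HU x).1).
have fin : finite_set (\bigcup_(i in [set` D']) (A `&` (U i)°)).
  apply: bigcup_finite; first exact: finite_fset.
  move=> i _; apply: subset1_finite => a b [Aa Ua] [Ab Ub].
  by apply: (HU i).2 => //; exact: interior_subset.
apply: (sub_finite_set _ fin).
move=> x [Ax Kx]; have [i Di Ui] := cov x Kx.
by exists i => //; split.
Qed.

Definition box n (M : R) : set 'rV[R]_n := [set v | forall i, `[-M, M]%classic (v ord0 i)].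
Arguments box : clear implicits.

Lemma box_compact n M : compact (box n M).
Proof. exact: (@rV_compact _ n (fun _ => `[-M, M]%classic) (fun i => @segment_compact R _ _)). Qed.

Definition q n (x : 'rV[R]_n) : R := \sum_i (x ord0 i) ^+ 2.

Lemma q_ge0 n (x : 'rV[R]_n) : 0 <= q x.
Proof. by apply: sumr_ge0 => i _; exact: sqr_ge0. Qed.

Lemma sqr_le_q n (x : 'rV[R]_n) i : (x ord0 i) ^+ 2 <= q x.
Proof.
rewrite /q (bigD1 i) //= lerDl.
by apply: sumr_ge0 => j _; exact: sqr_ge0.
Qed.

Lemma coord_le_q n (x : 'rV[R]_n) i : `|x ord0 i| <= 1 + q x.
Proof.
have := sqr_le_q x i; rewrite -real_normK ?num_real //.
move: `|x ord0 i| (normr_ge0 (x ord0 i)) => u u0 h.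
nra.
Qed.

Lemma in_box n (x : 'rV[R]_n) M : 1 + q x <= M -> box n M x.
Proof.
move=> h i; rewrite /= in_itv /= -ler_norml.
exact: le_trans (coord_le_q x i) h.
Qed.

Lemma discrete_countable n (A : set 'rV[R]_n) : discrete_subset A -> countable A.
Proof.
move=> dA.
apply: (sub_countable (B := \bigcup_(k in [set: nat]) (A `&` box n k%:R))).
  apply: subset_card_le => x Ax; exists (Num.Def.archi_bound (1 + q x)) => //.
  split => //; apply: in_box; apply: ltW; apply: archi_boundP.
  by rewrite addr_ge0 // q_ge0.
apply: bigcup_countable => // k _.
apply: finite_set_countable; apply: discrete_compact_finite => //.
exact: box_compact.
Qed.

Lemma q_discrete n (X : set 'rV[R]_n) : discrete_subset X ->
  discrete_subset [set q x | x in X].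
Proof.
move=> dX t.
pose M := `|t| + 2.
pose F := [set q x | x in X `&` box n M].
have fF : finite_set F.
  by apply: finite_image; apply: discrete_compact_finite => //; exact: box_compact.
pose F' := F `\ t.
have cF' : closed F'.
  have acc : @accessible_space R.
    by apply: hausdorff_accessible; exact: Rhausdorff.
  apply: (accessible_finite_set_closed.1 acc F').
  exact: (sub_finite_set (@subDsetl _ F [set t]) fF).
exists (ball t 1 `&` ~` F').
  apply: filterI; first exact: nbhsx_ballx.
  apply: open_nbhs_nbhs; split; first exact: closed_openC.
  by move=> [_ /= ]; apply.
have key : forall s, [set q x | x in X] s -> (ball t 1 `&` ~` F') s -> s = t.
  move=> _ [x Xx <-] [bt nF]; apply: contrapT => st; apply: nF; split => //.
  exists x => //; split => //; apply: in_box.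
  move: bt; rewrite /ball /= => h.
  have : q x - t <= `|t - q x| by rewrite distrC ler_norm.
  have : t <= `|t| by rewrite ler_norm.
  rewrite /M; lra.
by move=> a b Sa Sb Va Vb; rewrite (key a Sa Va) (key b Sb Vb).
Qed.

End Fin.

Section Generic.
Context {R : realType}.

Lemma R_uncountable (C : set R) : countable C -> exists s, ~ C s.
Proof.
move=> cC; apply: contrapT => hC.
have CT : C = setT.
  apply/seteqP; split => // s _; apply: contrapT => Cs; apply: hC; by exists s.
have := countable_lebesgue_measure0 cC.
rewrite CT.
have : (lebesgue_measure (`[0%R, 1%R]%classic : set R) <= lebesgue_measure (setT : set R))%E.
  apply: le_measure => //; apply/mem_set; [exact: measurable_itv|exact: measurableT].
have -> : lebesgue_measure (`[0%R, 1%R]%classic : set R) = 1%E.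
  by rewrite (lebesgue_measure_itv `[0%R, 1%R]) /= lte_fin ltr01 oppr0 adde0.
move=> h1 h0.
by move: h1; rewrite h0 lee_fin ler10.
Qed.


Lemma q_shift n (x : 'rV[R]_n) (k : 'I_n) (s : R) :
  q (x - s *: ev k) = q x - 2 * s * x ord0 k + s ^+ 2.
Proof.
rewrite -scaleNr /q (bigD1 k) //= [in RHS](bigD1 k) //= coordD eqxx.
rewrite (eq_bigr (fun i => x ord0 i ^+ 2)); last first.
  by move=> i ik; rewrite coordD eq_sym (negPf ik) addr0.
by ring.
Qed.

Lemma generic_center n (A : set 'rV[R]_n) : countable A ->
  exists c : 'rV[R]_n, forall a b, A a -> A b -> q (a - c) = q (b - c) -> a = b.
Proof.
move=> cA.
suff : forall m, exists c : 'rV[R]_n, forall a b, A a -> A b ->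
    (forall i : 'I_n, (m <= i)%N -> a ord0 i = b ord0 i) ->
    q (a - c) = q (b - c) -> a = b.
  move=> /(_ n) [c Hc]; exists c => a b Aa Ab; apply: Hc => // i.
  by rewrite leqNgt ltn_ord.
elim=> [|m [c IH]].
  exists 0 => a b _ _ h _; apply/rowP => i.
  exact: h.
case: (ltnP m n) => [mn|nm]; last first.
  exists c => a b Aa Ab h; apply: IH => // i mi.
  by move: (leq_trans nm mi); rewrite leqNgt ltn_ord.
pose k := Ordinal mn.
pose bad := [set (q (p.1 - c) - q (p.2 - c)) / (2 * (p.1 ord0 k - p.2 ord0 k)) | p in A `*` A].
have cbad : countable bad.
  apply: (sub_countable (card_image_le _ _)); exact: countableX.
have [s sbad] := R_uncountable cbad.
exists (c + s *: ev k) => a b Aa Ab h.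
rewrite !opprD !addrA !q_shift => e.
have e' : q (a - c) - q (b - c) = 2 * s * (a ord0 k - b ord0 k).
  move: e; rewrite !mxE /=.
  move=> e; apply/eqP; rewrite -subr_eq0; apply/eqP.
  have -> : 2 * s * (a ord0 k - b ord0 k) = 2 * s * ((a ord0 k - c ord0 k) - (b ord0 k - c ord0 k)) by ring.
  move: e; set u := q (a - c); set v := q (b - c); set w := a ord0 k - c ord0 k; set z := b ord0 k - c ord0 k.
  move=> e.
  have : u - 2 * s * w + s ^+ 2 - (v - 2 * s * z + s ^+ 2) = 0 by rewrite e subrr.
  move=> e2; rewrite -e2; ring.
case: (eqVneq (a ord0 k) (b ord0 k)) => akb.
  apply: IH => //; last by apply/eqP; rewrite -subr_eq0 e' akb subrr mulr0.
  move=> i mi; case: (eqVneq (i : nat) m) => [im|im].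
    by have -> : i = k by apply: val_inj.
  by apply: h; rewrite ltn_neqAle eq_sym im mi.
exfalso; apply: sbad; exists (a, b) => //=.
rewrite e'.
have h2 : 2 * (a ord0 k - b ord0 k) != 0.
  by rewrite mulf_neq0 // ?pnatr_eq0 // subr_eq0.
by rewrite (mulrC 2 s) -[s * 2 * _]mulrA mulfK.
Qed.

End Generic.

Section Twist.
Context {R : realType}.

Lemma q_cont n : continuous (@q R n).
Proof.
have -> : @q R n = \sum_(i < n) (fun x : 'rV[R]_n => (x ord0 i) ^+ 2).
  by rewrite fct_sumE.
apply: (big_ind (fun f : 'rV[R]_n -> R => continuous f)).
- exact: cst_continuous.
- by move=> f g cf cg x; apply: continuousD; [exact: cf|exact: cg].
- move=> i _ x.
  by apply: (@continuousM R _ (fun x : 'rV[R]_n => x ord0 i) (fun x => x ord0 i)); exact: coord_cont.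
Qed.

Lemma angle_ex (u v : R) : exists th : R, sin th * u + cos th * v = 0.
Proof.
case: (eqVneq u 0) => [->|u0].
  by exists (pi / 2); rewrite cos_pihalf mulr0 mul0r addr0.
exists (atan (- v / u)).
have cn : cos (atan (- v / u)) != 0.
  by rewrite cos_atan invr_eq0 gt_eqF // sqrtr_gt0 ltr_pwDl // sqr_ge0.
have := atanK (- v / u); set t := atan (- v / u) in cn * => e.
have -> : sin t = (- v / u) * cos t.
  by rewrite -e /tan mulfVK.
by field.
Qed.

Lemma coord2 n (x : 'rV[R]_n) (i0 j : 'I_n) (a b : R) (k : 'I_n) :
  (x + a *: ev i0 + b *: ev j) ord0 k =
  x ord0 k + (if i0 == k then a else 0) + (if j == k then b else 0).
Proof. by rewrite coordD coordD. Qed.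

Lemma q_pair n (i0 j : 'I_n) (x y : 'rV[R]_n) : i0 != j ->
  (forall k, k != i0 -> k != j -> y ord0 k = x ord0 k) ->
  y ord0 i0 ^+ 2 + y ord0 j ^+ 2 = x ord0 i0 ^+ 2 + x ord0 j ^+ 2 ->
  q y = q x.
Proof.
move=> ij hk h2; rewrite /q (bigD1 i0) // [in RHS](bigD1 i0) //=.
rewrite (bigD1 j) /=; last by rewrite eq_sym.
rewrite [in RHS](bigD1 j) /=; last by rewrite eq_sym.
rewrite (eq_bigr (fun i => x ord0 i ^+ 2)); last first.
  by move=> i /andP[ii0 ij']; rewrite hk.
by rewrite addrA h2 addrA.
Qed.

Definition twist n (i0 j : 'I_n) (th : R -> R) (x : 'rV[R]_n) : 'rV[R]_n :=
  x + ((cos (th (q x)) - 1) * x ord0 i0 - sin (th (q x)) * x ord0 j) *: ev i0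
    + (sin (th (q x)) * x ord0 i0 + (cos (th (q x)) - 1) * x ord0 j) *: ev j.

Definition untwist n (i0 j : 'I_n) (th : R -> R) (x : 'rV[R]_n) : 'rV[R]_n :=
  x + ((cos (th (q x)) - 1) * x ord0 i0 + sin (th (q x)) * x ord0 j) *: ev i0
    + (- sin (th (q x)) * x ord0 i0 + (cos (th (q x)) - 1) * x ord0 j) *: ev j.

Lemma twist_q n (i0 j : 'I_n) th (x : 'rV[R]_n) : i0 != j -> q (twist i0 j th x) = q x.
Proof.
move=> ij; apply: (q_pair (ij)) => [k ki kj|].
  by rewrite /twist coord2 eq_sym (negPf ki) eq_sym (negPf kj) !addr0.
rewrite /twist !coord2 !eqxx (negPf ij) eq_sym (negPf ij) !addr0.
have cs := cos2Dsin2 (th (q x)).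
set c := cos _ in cs *; set s := sin _ in cs *.
set u := x ord0 i0; set v := x ord0 j.
have -> : (u + ((c - 1) * u - s * v)) ^+ 2 + (v + (s * u + (c - 1) * v)) ^+ 2
  = (c ^+ 2 + s ^+ 2) * (u ^+ 2 + v ^+ 2) by ring.
by rewrite cs mul1r.
Qed.

Lemma untwist_q n (i0 j : 'I_n) th (x : 'rV[R]_n) : i0 != j -> q (untwist i0 j th x) = q x.
Proof.
move=> ij; apply: (q_pair (ij)) => [k ki kj|].
  by rewrite /untwist coord2 eq_sym (negPf ki) eq_sym (negPf kj) !addr0.
rewrite /untwist !coord2 !eqxx (negPf ij) eq_sym (negPf ij) !addr0.
have cs := cos2Dsin2 (th (q x)).
set c := cos _ in cs *; set s := sin _ in cs *.
set u := x ord0 i0; set v := x ord0 j.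
have -> : (u + ((c - 1) * u + s * v)) ^+ 2 + (v + (- s * u + (c - 1) * v)) ^+ 2
  = (c ^+ 2 + s ^+ 2) * (u ^+ 2 + v ^+ 2) by ring.
by rewrite cs mul1r.
Qed.


Section ContHelpers.
Variable T : topologicalType.
Lemma cM (f g : T -> R) : continuous f -> continuous g -> continuous (fun x => f x * g x).
Proof. by move=> cf cg x; apply: (@continuousM R T f g); [exact: cf|exact: cg]. Qed.
Lemma cD (f g : T -> R) : continuous f -> continuous g -> continuous (fun x => f x + g x).
Proof. by move=> cf cg x; apply: (@continuousD R R^o T f g); [exact: cf|exact: cg]. Qed.
Lemma cB (f g : T -> R) : continuous f -> continuous g -> continuous (fun x => f x - g x).
Proof. by move=> cf cg x; apply: (@continuousB R R^o T f g); [exact: cf|exact: cg]. Qed.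
Lemma cN (f : T -> R) : continuous f -> continuous (fun x => - f x).
Proof. by move=> cf x; apply: (@continuousN R R^o T f); exact: cf. Qed.
Lemma cC (a : R) : continuous (fun _ : T => a).
Proof. exact: cst_continuous. Qed.
Lemma cO (f : T -> R) (g : R -> R) : continuous f -> continuous g -> continuous (fun x => g (f x)).
Proof. by move=> cf cg x; apply: (@continuous_comp _ _ _ f g); [exact: cf|exact: cg]. Qed.
Lemma cDv n (f g : T -> 'rV[R]_n) : continuous f -> continuous g -> continuous (fun x => f x + g x).
Proof. by move=> cf cg x; apply: (@continuousD R _ T f g); [exact: cf|exact: cg]. Qed.
Lemma cZv n (f : T -> R) (v : 'rV[R]_n) : continuous f -> continuous (fun x => f x *: v).
Proof. by move=> cf x; apply: (@continuousZr_tmp R _ T f v); exact: cf. Qed.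
End ContHelpers.

Lemma twist_coords n (i0 j : 'I_n) th (x : 'rV[R]_n) : i0 != j ->
  [/\ twist i0 j th x ord0 i0 = cos (th (q x)) * x ord0 i0 - sin (th (q x)) * x ord0 j,
      twist i0 j th x ord0 j = sin (th (q x)) * x ord0 i0 + cos (th (q x)) * x ord0 j &
      forall k, k != i0 -> k != j -> twist i0 j th x ord0 k = x ord0 k].
Proof.
move=> ij; rewrite /twist !coord2 !eqxx (negPf ij) eq_sym (negPf ij) !addr0; split.
- by ring.
- by ring.
- by move=> k ki kj; rewrite coord2 eq_sym (negPf ki) eq_sym (negPf kj) !addr0.
Qed.

Lemma untwist_coords n (i0 j : 'I_n) th (x : 'rV[R]_n) : i0 != j ->
  [/\ untwist i0 j th x ord0 i0 = cos (th (q x)) * x ord0 i0 + sin (th (q x)) * x ord0 j,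
      untwist i0 j th x ord0 j = - sin (th (q x)) * x ord0 i0 + cos (th (q x)) * x ord0 j &
      forall k, k != i0 -> k != j -> untwist i0 j th x ord0 k = x ord0 k].
Proof.
move=> ij; rewrite /untwist !coord2 !eqxx (negPf ij) eq_sym (negPf ij) !addr0; split.
- by ring.
- by ring.
- by move=> k ki kj; rewrite coord2 eq_sym (negPf ki) eq_sym (negPf kj) !addr0.
Qed.

Lemma twist_homeo n (i0 j : 'I_n) th : i0 != j -> continuous th ->
  self_homeomorphism (twist i0 j th).
Proof.
move=> ij cth.
have cq := @q_cont n.
exists (untwist i0 j th); split.
- move=> x; have [t0 tj tk] := twist_coords th x ij.
  have [u0 uj uk] := untwist_coords th (twist i0 j th x) ij.
  have cs := cos2Dsin2 (th (q x)).
  rewrite twist_q // in u0 uj.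
  apply/rowP => k.
  case: (eqVneq k i0) => [->|ki].
    rewrite u0 t0 tj.
    set c := cos _ in cs *; set s := sin _ in cs *.
    transitivity ((c ^+ 2 + s ^+ 2) * x ord0 i0); first by ring.
    by rewrite cs mul1r.
  case: (eqVneq k j) => [->|kj].
    rewrite uj t0 tj.
    set c := cos _ in cs *; set s := sin _ in cs *.
    transitivity ((c ^+ 2 + s ^+ 2) * x ord0 j); first by ring.
    by rewrite cs mul1r.
  by rewrite uk // tk.
- move=> x; have [u0 uj uk] := untwist_coords th x ij.
  have [t0 tj tk] := twist_coords th (untwist i0 j th x) ij.
  have cs := cos2Dsin2 (th (q x)).
  rewrite untwist_q // in t0 tj.
  apply/rowP => k.
  case: (eqVneq k i0) => [->|ki].
    rewrite t0 u0 uj.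
    set c := cos _ in cs *; set s := sin _ in cs *.
    transitivity ((c ^+ 2 + s ^+ 2) * x ord0 i0); first by ring.
    by rewrite cs mul1r.
  case: (eqVneq k j) => [->|kj].
    rewrite tj u0 uj.
    set c := cos _ in cs *; set s := sin _ in cs *.
    transitivity ((c ^+ 2 + s ^+ 2) * x ord0 j); first by ring.
    by rewrite cs mul1r.
  by rewrite tk // uk.
- have cc : continuous (fun x : 'rV[R]_n => cos (th (q x))).
    by apply: cO; [apply: cO|move=> t; exact: continuous_cos].
  have cs : continuous (fun x : 'rV[R]_n => sin (th (q x))).
    by apply: cO; [apply: cO|move=> t; exact: continuous_sin].
  have c0 := @coord_cont R n i0; have cj := @coord_cont R n j.
  apply: cDv; first apply: cDv.
  + by move=> x; exact: cvg_id.
  + apply: cZv; apply: cB; apply: cM => //; apply: cB => //; exact: cC.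
  + apply: cZv; apply: cD; apply: cM => //; apply: cB => //; exact: cC.
- have cc : continuous (fun x : 'rV[R]_n => cos (th (q x))).
    by apply: cO; [apply: cO|move=> t; exact: continuous_cos].
  have cs : continuous (fun x : 'rV[R]_n => sin (th (q x))).
    by apply: cO; [apply: cO|move=> t; exact: continuous_sin].
  have c0 := @coord_cont R n i0; have cj := @coord_cont R n j.
  apply: cDv; first apply: cDv.
  + by move=> x; exact: cvg_id.
  + apply: cZv; apply: cD; apply: cM => //; apply: cB => //; exact: cC.
  + apply: cZv; apply: cD; apply: cM => //; [exact: cN|apply: cB => //; exact: cC].
Qed.

End Twist.

Section Stage1.
Context {R : realType}.

Lemma twist_step n (i0 j : 'I_n) (X : set 'rV[R]_n) : i0 != j -> discrete_subset X ->
  (forall a b, X a -> X b -> q a = q b -> a = b) ->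
  exists h, [/\ self_homeomorphism h, (forall x, q (h x) = q x),
    (forall x, X x -> h x ord0 j = 0) &
    (forall x k, k != i0 -> k != j -> h x ord0 k = x ord0 k)].
Proof.
move=> ij dX qinj.
pose px t := xget 0 [set x | X x /\ q x = t].
have pxE x : X x -> px (q x) = x.
  move=> Xx; apply: xget_unique; first by split.
  by move=> y [Xy qy]; apply: qinj.
pose ang t := xget 0 [set th : R | sin th * px t ord0 i0 + cos th * px t ord0 j = 0].
have [th [cth eth]] := ext1 ang (q_discrete dX).
exists (twist i0 j th); split.
- exact: twist_homeo.
- by move=> x; exact: twist_q.
- move=> x Xx; have [_ tj _] := twist_coords th x ij.
  rewrite tj eth; last by exists x.
  have := @xgetPex _ 0 [set th : R | sin th * px (q x) ord0 i0 + cos th * px (q x) ord0 j = 0]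
    (angle_ex _ _).
  by rewrite /ang pxE.
- by move=> x k ki kj; have [_ _ tk] := twist_coords th x ij; exact: tk.
Qed.

Lemma transl_homeo n (v : 'rV[R]_n) : self_homeomorphism (fun x : 'rV[R]_n => x + v).
Proof.
exists (fun x : 'rV[R]_n => x - v); split.
- by move=> x; rewrite addrK.
- by move=> x; rewrite subrK.
- by apply: cDv; [move=> x; exact: cvg_id|exact: cst_continuous].
- by apply: cDv; [move=> x; exact: cvg_id|exact: cst_continuous].
Qed.

Lemma stage1 n (i0 : 'I_n) (A : set 'rV[R]_n) : discrete_subset A ->
  exists H, self_homeomorphism H /\ forall a, A a -> on_axis i0 (H a).
Proof.
move=> dA.
have [c Hc] := generic_center (discrete_countable dA).
suff : forall m, exists H, [/\ self_homeomorphism H,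
    (forall a b, A a -> A b -> q (H a) = q (H b) -> a = b) &
    (forall a, A a -> forall k : 'I_n, (k < m)%N -> k != i0 -> H a ord0 k = 0)].
  move=> /(_ n) [H [hH qH zH]]; exists H; split => // a Aa k ki.
  exact: zH.
elim=> [|m [H [hH qH zH]]].
  exists (fun x => x + - c); split; [exact: transl_homeo | exact: Hc | by move=> a _ k; rewrite ltn0].
case: (ltnP m n) => [mn|nm]; last first.
  exists H; split => // a Aa k km ki; apply: zH => //.
  exact: leq_trans (ltn_ord k) nm.
pose k := Ordinal mn.
case: (eqVneq k i0) => [ki0|ki0].
  exists H; split => // a Aa k' k'm k'i; apply: zH => //.
  rewrite ltn_neqAle -ltnS k'm andbT.
  apply/negP => /eqP e; apply/negP: k'i; apply/negPn/eqP.
  by rewrite -ki0; apply: val_inj.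
have dX := discrete_homeo_image hH dA.
have qX : forall a b, (H @` A) a -> (H @` A) b -> q a = q b -> a = b.
  by move=> _ _ [a Aa <-] [b Bb <-] e; rewrite (qH a b).
have ik : i0 != k by rewrite eq_sym.
have [T [hT qT zT kT]] := twist_step ik dX qX.
exists (T \o H); split.
- exact: homeo_comp.
- by move=> a b Aa Ab /=; rewrite !qT; exact: qH.
- move=> a Aa k' k'm k'i /=.
  case: (eqVneq k' k) => [->|k'k].
    by apply: zT; exists a.
  rewrite kT //; apply: zH => //.
  rewrite ltn_neqAle -ltnS k'm andbT.
  by apply/negP => /eqP e; apply/negP: k'k; apply/negPn/eqP; apply: val_inj.
Qed.

End Stage1.

Unset Implicit Arguments.
Theorem mainTheorem9 (R : realType) (n : nat) (hn : (2 < n)%N) :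
  sDH 'rV[R]_n.
Proof.
split; first exact: norm_hausdorff.
move=> A B f dA dB [fAB finj _].
have n0 : (0 < n)%N by apply: leq_trans hn.
have n1 : (1 < n)%N by apply: leq_trans hn.
pose i0 : 'I_n := Ordinal n0.
pose i1 : 'I_n := Ordinal n1.
have i01 : i0 != i1 by [].
have [HA [hA axA]] := stage1 i0 dA.
have [HB [hB axB]] := stage1 i0 dB.
have [gA [_ HAg gAH]] := homeo_inv hA.
have [gB [hgB HBg gBH]] := homeo_inv hB.
pose f' := HB \o f \o gA.
have dA' := discrete_homeo_image hA dA.
have dfA' : discrete_subset (f' @` (HA @` A)).
  apply: (discrete_sub _ (discrete_homeo_image hB dB)).
  move=> _ [_ [a Aa <-] <-]; exists (f a); first exact: fAB.
  by rewrite /f' /= HAg.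
have ax1 : forall a, (HA @` A) a -> on_axis i0 a.
  by move=> _ [a Aa <-]; exact: axA.
have ax2 : forall a, (HA @` A) a -> on_axis i0 (f' a).
  move=> _ [a Aa <-]; rewrite /f' /= HAg; apply: axB; exact: fAB.
have inj' : forall a b, (HA @` A) a -> (HA @` A) b -> f' a = f' b -> a = b.
  move=> _ _ [a Aa <-] [b Ab <-]; rewrite /f' /= !HAg => e.
  have e' : f a = f b by rewrite -(HBg (f a)) e HBg.
  by rewrite (finj a b (mem_set Aa) (mem_set Ab) e').
have [K [hK Kf]] := stage2 i01 dA' dfA' ax1 ax2 inj'.
exists (gB \o K \o HA); split.
  by apply: homeo_comp => //; apply: homeo_comp.
move=> a Aa /=; rewrite Kf; last by exists a.
by rewrite /f' /= HAg HBg.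
Qed.
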